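(* System 3 has exactly four fixed points, the double poles $p_{\varepsilon_1,\varepsilon_2}=((0,0,\varepsilon_11),(0,0,\varepsilon_21))$, $\varepsilon_1,\varepsilon_2\in\{+,-\}$. The fixed points $p_{+,+}$, $p_{+,-}$ and $p_{-,+}$ are non-degenerate of elliptic-elliptic type for all $t\in[0,1]$, while $p_{-,-}$ is non-degenerate of elliptic-elliptic type if $t<t^-$ or $t>t^+$, non-degenerate of focus-focus type if $t^-<t<t^+$, and degenerate if $t\in\{t^-,t^+\}$, where $$t^\pm=\frac{R_2}{2R_2+R_1\mp2\sqrt{R_1R_2}}.$$
   Context: Let $0<R_1<R_2$ and $t\in[0,1]$. On $M=S^2\times S^2$ with Cartesian coordinates $(x_i,y_i,z_i)$, $x_i^2+y_i^2+z_i^2=1$, and cylindrical coordinates $(\theta_i,z_i)$, $\theta_i=\arg(x_i+iy_i)$, System 3 is the $b$-integrable system with $Z=\{z_2=0\}$, $b$-symplectic form $\omega=R_1\,dz_1\wedge d\theta_1+R_2\frac{dz_2}{z_2}\wedge d\theta_2$ (in the local chart $(x_1,y_1,x_2,y_2)$ on $\{\varepsilon_1z_1>0,\varepsilon_2z_2>0\}$: $\omega=-\varepsilon_1\frac{R_1}{\sqrt{1-x_1^2-y_1^2}}dx_1\wedge dy_1-\frac{R_2}{1-x_2^2-y_2^2}dx_2\wedge dy_2$), and $L=R_1z_1+R_2\log|z_2|$, $H=(1-t)z_1+t(x_1x_2+y_1y_2+z_1z_2)$. A fixed point is a point where $dL=dH=0$. A fixed point $p$ with $\Omega$ the matrix of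 $\omega$ at $p$ is non-degenerate if $A_L=\Omega^{-1}d^2L(p)$, $A_H=\Omega^{-1}d^2H(p)$ span a Cartan subalgebra of $\mathfrak{sp}(4,\mathbb R)$; it is elliptic-elliptic if some combination $c_1A_L+c_2A_H$ has four distinct eigenvalues $\pm i\alpha,\pm i\beta$ ($\alpha\ne\beta$ nonzero reals) and focus-focus if such a combination has eigenvalues $\pm\alpha\pm i\beta$ with $\alpha,\beta$ nonzero reals. *)

(* Defs.v *)
From mathcomp Require Import all_boot all_order all_algebra.
From mathcomp Require Import all_classical all_reals all_analysis.
From mathcomp.real_closed Require Import complex.
Set Implicit Arguments. Unset Strict Implicit. Unset Printing Implicit Defensive.
Import Order.TTheory GRing.Theory Num.Theory.
Local Open Scope ring_scope.

Section System3.
Variable R : realType.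

(* A point of R^6 is a row vector (x1, y1, z1, x2, y2, z2). *)
Definition co6 (p : 'rV[R]_6) (k : nat) : R := p ord0 (inord k).
Definition co4 (q : 'rV[R]_4) (k : nat) : R := q ord0 (inord k).

Definition mk6 (a b c d e f : R) : 'rV[R]_6 :=
  \row_(i < 6) nth 0 [:: a; b; c; d; e; f] i.

Definition onM (p : 'rV[R]_6) : Prop :=
  co6 p 0 ^+ 2 + co6 p 1 ^+ 2 + co6 p 2 ^+ 2 = 1 /\
  co6 p 3 ^+ 2 + co6 p 4 ^+ 2 + co6 p 5 ^+ 2 = 1.

Definition tangentM (p w : 'rV[R]_6) : Prop :=
  co6 w 0 * co6 p 0 + co6 w 1 * co6 p 1 + co6 w 2 * co6 p 2 = 0 /\
  co6 w 3 * co6 p 3 + co6 w 4 * co6 p 4 + co6 w 5 * co6 p 5 = 0.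

Definition inZ (p : 'rV[R]_6) : Prop := co6 p 5 = 0.

(* A b-function  f + c log|z2|  with f smooth (given by an expression on R^6
   whose restriction to M is meant) and c a constant. *)
Record bfun := BFun { bsmooth : 'rV[R]_6 -> R ; blog : R }.

Definition bval (F : bfun) (p : 'rV[R]_6) : R :=
  bsmooth F p + blog F * ln `|co6 p 5|.

(* Off Z the b-cotangent space is the usual cotangent space: dF(p) = 0 on T_pM.
   On Z, in the b-cotangent basis (dz2/z2, dw) (w coordinates of Z), one has
   dF = c (dz2/z2) + (d f restricted to T_pZ), so it vanishes iff c = 0 and
   df vanishes on T_pZ. *)
Definition b_crit (F : bfun) (p : 'rV[R]_6) : Prop :=
  if co6 p 5 != 0 then
    forall w, tangentM p w -> 'D_w (bval F) p = 0
  else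
    blog F = 0 /\
    forall w, tangentM p w -> co6 w 5 = 0 -> 'D_w (bsmooth F) p = 0.

Definition Lsys (R1 R2 : R) : bfun := BFun (fun p => R1 * co6 p 2) R2.
Definition Hsys (t : R) : bfun :=
  BFun (fun p => (1 - t) * co6 p 2 +
                 t * (co6 p 0 * co6 p 3 + co6 p 1 * co6 p 4 + co6 p 2 * co6 p 5)) 0.

Definition fixed_point (R1 R2 t : R) (p : 'rV[R]_6) : Prop :=
  onM p /\ b_crit (Lsys R1 R2) p /\ b_crit (Hsys t) p.

Definition sgnb (e : bool) : R := if e then 1 else -1.

(* the double pole p_{e1,e2} = ((0,0,e1),(0,0,e2)),  true = +, false = - *)
Definition pole (e1 e2 : bool) : 'rV[R]_6 := mk6 0 0 (sgnb e1) 0 0 (sgnb e2).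

Definition chart_inv (e1 e2 : bool) (q : 'rV[R]_4) : 'rV[R]_6 :=
  mk6 (co4 q 0) (co4 q 1) (sgnb e1 * Num.sqrt (1 - co4 q 0 ^+ 2 - co4 q 1 ^+ 2))
      (co4 q 2) (co4 q 3) (sgnb e2 * Num.sqrt (1 - co4 q 2 ^+ 2 - co4 q 3 ^+ 2)).

Definition chart_pole : 'rV[R]_4 := 0.

Definition ebasis (i : 'I_4) : 'rV[R]_4 := delta_mx 0 i.

Definition hessian (g : 'rV[R]_4 -> R) (q : 'rV[R]_4) : 'M[R]_4 :=
  \matrix_(i < 4, j < 4) 'D_(ebasis j) (fun r => 'D_(ebasis i) g r) q.

(* matrix Omega_{ij} = omega(d_i, d_j) of
   omega = -e1 R1/sqrt(1-x1^2-y1^2) dx1/\dy1 - R2/(1-x2^2-y2^2) dx2/\dy2 *)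
Definition Omega (R1 R2 : R) (e1 : bool) (q : 'rV[R]_4) : 'M[R]_4 :=
  let a := - (sgnb e1 * R1 / Num.sqrt (1 - co4 q 0 ^+ 2 - co4 q 1 ^+ 2)) in
  let b := - (R2 / (1 - co4 q 2 ^+ 2 - co4 q 3 ^+ 2)) in
  \matrix_(i < 4, j < 4)
    (if (i == 0 :> nat) && (j == 1 :> nat) then a
     else if (i == 1 :> nat) && (j == 0 :> nat) then - a
     else if (i == 2 :> nat) && (j == 3 :> nat) then b
     else if (i == 3 :> nat) && (j == 2 :> nat) then - b
     else 0).

Definition Amat (R1 R2 : R) (e1 e2 : bool) (F : bfun) : 'M[R]_4 :=
  invmx (Omega R1 R2 e1 chart_pole) *m
  hessian (fun q => bval F (chart_inv e1 e2 q)) chart_pole.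

Definition lieb (X Y : 'M[R]_4) : 'M[R]_4 := X *m Y - Y *m X.

(* sp(4,R) realised as the symplectic Lie algebra of the form Omega *)
Definition in_sp (Om X : 'M[R]_4) : Prop := X^T *m Om + Om *m X = 0.

Definition span2 (A B X : 'M[R]_4) : Prop := exists c1 c2 : R, X = c1 *: A + c2 *: B.

Definition cartan_subalgebra (Om : 'M[R]_4) (h : 'M[R]_4 -> Prop) : Prop :=
  (forall X, h X -> in_sp Om X) /\
  (forall X Y, h X -> h Y -> h (X + Y)) /\
  (forall c X, h X -> h (c *: X)) /\ h 0 /\
  (forall X Y, h X -> h Y -> h (lieb X Y)) /\
  (exists k : nat, forall (xs : seq 'M[R]_4) (Y : 'M[R]_4),
      size xs = k -> (forall X, X \in xs -> h X) -> h Y ->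
      foldr lieb Y xs = 0) /\
  (forall X, in_sp Om X -> (forall Y, h Y -> h (lieb X Y)) -> h X).

Definition nondeg_fixed_point (R1 R2 t : R) (e1 e2 : bool) : Prop :=
  cartan_subalgebra (Omega R1 R2 e1 chart_pole)
    (span2 (Amat R1 R2 e1 e2 (Lsys R1 R2)) (Amat R1 R2 e1 e2 (Hsys t))).

Definition ceig (M : 'M[R]_4) (l : R[i]) : Prop :=
  eigenvalue (map_mx (fun x : R => (x%:C)%C) M) l.

Definition is_EE_matrix (M : 'M[R]_4) : Prop :=
  exists al be : R, al != 0 /\ be != 0 /\ al != be /\
    uniq [:: Complex 0 al; Complex 0 (- al); Complex 0 be; Complex 0 (- be)] /\
    forall l, ceig M l <->
      l \in [:: Complex 0 al; Complex 0 (- al); Complex 0 be; Complex 0 (- be)].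

Definition is_FF_matrix (M : 'M[R]_4) : Prop :=
  exists al be : R, al != 0 /\ be != 0 /\
    forall l, ceig M l <->
      l \in [:: Complex al be; Complex al (- be); Complex (- al) be; Complex (- al) (- be)].

Definition elliptic_elliptic (R1 R2 t : R) (e1 e2 : bool) : Prop :=
  exists c1 c2 : R, is_EE_matrix (c1 *: Amat R1 R2 e1 e2 (Lsys R1 R2) +
                                  c2 *: Amat R1 R2 e1 e2 (Hsys t)).

Definition focus_focus (R1 R2 t : R) (e1 e2 : bool) : Prop :=
  exists c1 c2 : R, is_FF_matrix (c1 *: Amat R1 R2 e1 e2 (Lsys R1 R2) +
                                  c2 *: Amat R1 R2 e1 e2 (Hsys t)).

Definition t_minus (R1 R2 : R) : R := R2 / (2 * R2 + R1 + 2 * Num.sqrt (R1 * R2)).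
Definition t_plus (R1 R2 : R) : R := R2 / (2 * R2 + R1 - 2 * Num.sqrt (R1 * R2)).

End System3.

(* Main.v *)
Require Import Defs.
From mathcomp Require Import all_boot all_order all_algebra.
From mathcomp Require Import all_classical all_reals all_analysis.
From mathcomp.real_closed Require Import complex.
From mathcomp Require Import ring lra.
Import Order.TTheory GRing.Theory Num.Theory.
Local Open Scope ring_scope.
Set Implicit Arguments. Unset Strict Implicit. Unset Printing Implicit Defensive.

Section Alg.
Variable R : realType.

Definition m44 (f : nat -> nat -> R) : 'M[R]_4 := \matrix_(i < 4, j < 4) f i j.

Lemma m44E f (a b : nat) : (a < 4)%N -> (b < 4)%N -> m44 f (inord a) (inord b) = f a b.
Proof. by move=> ha hb; rewrite mxE !inordK. Qed.

Lemma sum4 (F : 'I_4 -> R) :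
  \sum_(k < 4) F k = F (inord 0) + F (inord 1) + F (inord 2) + F (inord 3).
Proof.
rewrite !big_ord_recl big_ord0 addr0 !addrA.
by congr (_ + _ + _ + _); apply: congr1; apply: val_inj; rewrite /= inordK.
Qed.

Lemma eq44 (A B : 'M[R]_4) :
  (forall a b : nat, (a < 4)%N -> (b < 4)%N -> A (inord a) (inord b) = B (inord a) (inord b)) -> A = B.
Proof.
move=> H; apply/matrixP => i j.
have := H i j (ltn_ord i) (ltn_ord j).
by rewrite !inord_val.
Qed.

Lemma mulmx44 (A B : 'M[R]_4) (a b : nat) :
  (A *m B) (inord a) (inord b) =
  A (inord a) (inord 0) * B (inord 0) (inord b) +
  A (inord a) (inord 1) * B (inord 1) (inord b) +
  A (inord a) (inord 2) * B (inord 2) (inord b) +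
  A (inord a) (inord 3) * B (inord 3) (inord b).
Proof. by rewrite mxE sum4. Qed.

End Alg.

Section Alg2.
Variable R : realType.
Implicit Types n : nat -> nat -> R.

Definition Ej n : 'M[R]_4 := m44 (fun i j => if odd i == odd j then 0
  else if odd i then n i./2 j./2 else - n i./2 j./2).
Definition Ei n : 'M[R]_4 := m44 (fun i j => if odd i == odd j then n i./2 j./2 else 0).
Definition mul2 n n' : nat -> nat -> R := fun k l => n k 0%N * n' 0%N l + n k 1%N * n' 1%N l.

Ltac t44 := apply: eq44; case=> [|[|[|[|?]]]]; case=> [|[|[|[|?]]]] //= _ _;
  rewrite ?mulmx44 ?m44E //=.

Lemma EjEi n n' : Ej n *m Ei n' = Ej (mul2 n n').
Proof. rewrite /Ej /Ei; t44; rewrite /mul2 /=; ring. Qed.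
Lemma EiEj n n' : Ei n *m Ej n' = Ej (mul2 n n').
Proof. rewrite /Ej /Ei; t44; rewrite /mul2 /=; ring. Qed.
Lemma EjEj n n' : Ej n *m Ej n' = Ei (fun k l => - mul2 n n' k l).
Proof. rewrite /Ej /Ei; t44; rewrite /mul2 /=; ring. Qed.

End Alg2.

Section Alg3.
Variable R : realType.
Implicit Types n : nat -> nat -> R.

Ltac t44 := apply: eq44; case=> [|[|[|[|?]]]]; case=> [|[|[|[|?]]]] //= _ _;
  rewrite ?mxE ?sum4 ?mxE ?inordK //=.

Definition m2 (a b c d : R) : nat -> nat -> R :=
  fun k l => if k == 0%N then (if l == 0%N then a else b) else (if l == 0%N then c else d).
Definition id2 := m2 1 0 0 1.
Definition dg (d0 d1 : R) := m2 d0 0 0 d1.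
Definition lin2 (c1 c2 : R) n : nat -> nat -> R := fun k l => c1 * id2 k l + c2 * n k l.

Lemma span_Ej c1 c2 n : c1 *: Ej id2 + c2 *: Ej n = Ej (lin2 c1 c2 n).
Proof. rewrite /Ej /lin2 /id2 /m2; t44; ring. Qed.

Lemma lieb_EE (xx xy M : nat -> nat -> R) : lieb (Ei xx + Ej xy) (Ej M) =
  Ej (fun k l => mul2 xx M k l - mul2 M xx k l) +
  Ei (fun k l => mul2 M xy k l - mul2 xy M k l).
Proof. rewrite /lieb /Ej /Ei /mul2; t44; ring. Qed.

End Alg3.
Arguments id2 {R}.

Section Key.
Variable R : realType.

Lemma key2 (d0 d1 m00 m01 m10 m11 p q a00 a01 a10 a11 b00 b01 b10 b11 : R) :
  d0 != 0 -> d1 != 0 -> d0 * m01 = d1 * m10 -> (m00 - m11)^+2 + 4 * (m01 * m10) != 0 ->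
  d0 * a00 = 0 -> d1 * a11 = 0 -> a10 * d1 + d0 * a01 = 0 -> b10 * d1 = d0 * b01 ->
  a00 * m00 + a01 * m10 - (m00 * a00 + m01 * a10) = p + q * m00 ->
  a00 * m01 + a01 * m11 - (m00 * a01 + m01 * a11) = q * m01 ->
  a10 * m00 + a11 * m10 - (m10 * a00 + m11 * a10) = q * m10 ->
  a10 * m01 + a11 * m11 - (m10 * a01 + m11 * a11) = p + q * m11 ->
  m00 * b01 + m01 * b11 - (b00 * m01 + b01 * m11) = 0 ->
  m10 * b00 + m11 * b10 - (b10 * m00 + b11 * m10) = 0 ->
  (a00 = 0 /\ a01 = 0 /\ a10 = 0 /\ a11 = 0) /\
   exists u v, (b00 = u + v * m00 /\ b01 = v * m01 /\ b10 = v * m10 /\ b11 = u + v * m11).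
Proof.
move=> hd0 hd1 hm hdisc h00 h11 h01 hb E00 E01 E10 E11 F01 F10.
have a00z : a00 = 0 by move: h00 => /eqP; rewrite mulf_eq0 (negbTE hd0) /= => /eqP.
have a11z : a11 = 0 by move: h11 => /eqP; rewrite mulf_eq0 (negbTE hd1) /= => /eqP.
subst a00 a11.
have k1 : d1 * (4 * m10 * a01) = d1 * (q * (m00 - m11)).
  have := congr1 (fun z => d1 * z) E00; have := congr1 (fun z => d1 * z) E11.
  have := congr1 (fun z => m01 * z) h01; have := congr1 (fun z => a01 * z) hm.
  rewrite /=; lra.
have {}k1 : 4 * m10 * a01 = q * (m00 - m11) by apply: (mulfI hd1).
have k2 : q * ((m00 - m11)^+2 + 4 * (m01 * m10)) = 0.
  have := congr1 (fun z => (m00 - m11) * z) k1; have := congr1 (fun z => 4 * m10 * z) E01.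
  rewrite /=; lra.
have qz : q = 0 by move: k2 => /eqP; rewrite mulf_eq0 (negbTE hdisc) orbF => /eqP.
subst q.
have a01z : a01 = 0.
  have [//|ha] := eqVneq a01 0; exfalso.
  have m10z : m10 = 0.
    have : m10 * a01 = 0 by lra.
    by move/eqP; rewrite mulf_eq0 (negbTE ha) orbF => /eqP.
  have dz : m00 - m11 = 0.
    have : (m00 - m11) * a01 = 0 by lra.
    by move/eqP; rewrite mulf_eq0 (negbTE ha) orbF => /eqP.
  by move: hdisc; rewrite dz m10z expr0n /= mulr0 mulr0 addr0 eqxx.
subst a01.
have a10z : a10 = 0.
  by move: h01 => /eqP; rewrite mulr0 addr0 mulf_eq0 (negbTE hd1) orbF => /eqP.
subst a10; split; first by [].
have [m01z|m01n] := eqVneq m01 0.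
  subst m01.
  have m10z : m10 = 0.
    by move: hm => /eqP; rewrite mulr0 eq_sym mulf_eq0 (negbTE hd1) /= => /eqP.
  subst m10.
  have dn : m00 - m11 != 0.
    by apply: contraNneq hdisc => ->; rewrite expr0n /= !mulr0 addr0.
  have b01z : b01 = 0.
    have : (m00 - m11) * b01 = 0 by lra.
    by move/eqP; rewrite mulf_eq0 (negbTE dn) /= => /eqP.
  have b10z : b10 = 0.
    have : (m00 - m11) * b10 = 0 by lra.
    by move/eqP; rewrite mulf_eq0 (negbTE dn) /= => /eqP.
  exists (b00 - (b00 - b11) / (m00 - m11) * m00), ((b00 - b11) / (m00 - m11)).
  rewrite b01z b10z !mulr0; split; first ring.
  by split => //; split => //; field.
have e10 : b10 * m01 = b01 * m10.
  apply: (mulfI hd1).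
  have := congr1 (fun z => m01 * z) hb; have := congr1 (fun z => b01 * z) hm.
  rewrite /=; lra.
exists (b00 - b01 / m01 * m00), (b01 / m01).
split; first ring.
split; first by field.
split.
- by apply: (mulIf m01n); rewrite e10; field.
- apply: (mulIf m01n).
  have -> : (b00 - b01 / m01 * m00 + b01 / m01 * m11) * m01 =
            b00 * m01 - b01 * m00 + b01 * m11 by field.
  lra.
Qed.

End Key.

Section Cartan.
Variable R : realType.
Implicit Types n : nat -> nat -> R.

Ltac t44 := apply: eq44; case=> [|[|[|[|?]]]]; case=> [|[|[|[|?]]]] //= _ _;
  rewrite ?mxE ?sum4 ?mxE ?inordK //=.

Definition f0 : nat -> nat -> R := fun _ _ => 0.

Lemma sp_EE (xx xy : nat -> nat -> R) d0 d1 :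
  (Ei xx + Ej xy)^T *m Ej (dg d0 d1) + Ej (dg d0 d1) *m (Ei xx + Ej xy) =
  Ej (fun k l => mul2 (fun a b => xx b a) (dg d0 d1) k l + mul2 (dg d0 d1) xx k l) +
  Ei (fun k l => mul2 (fun a b => xy b a) (dg d0 d1) k l - mul2 (dg d0 d1) xy k l).
Proof. rewrite /Ej /Ei /mul2 /dg /m2; t44; ring. Qed.

Lemma EE_inj n n' m m' : Ej n + Ei n' = Ej m + Ei m' ->
  forall k l : nat, (k < 2)%N -> (l < 2)%N -> n k l = m k l /\ n' k l = m' k l.
Proof.
move=> E k l hk hl.
have e1 := congr1 (fun A : 'M[R]_4 => A (inord (k.*2.+1)) (inord (l.*2))) E.
have e2 := congr1 (fun A : 'M[R]_4 => A (inord (k.*2)) (inord (l.*2))) E.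
move: e1 e2 {E}; move: hk hl; case: k => [|[|]] //; case: l => [|[|]] // _ _;
  rewrite /Ej /Ei !mxE !inordK //= ?addr0 ?add0r //.
Qed.

Lemma Ej0 : Ej f0 = 0.
Proof. rewrite /Ej /f0; t44; by rewrite ?oppr0 ?if_same. Qed.
Lemma Ei0 : Ei f0 = 0.
Proof. rewrite /Ei /f0; t44; by rewrite ?oppr0 ?if_same. Qed.

End Cartan.
Arguments f0 {R}.

Section Cartan2.
Variable R : realType.
Implicit Types n : nat -> nat -> R.

Ltac t44 := apply: eq44; case=> [|[|[|[|?]]]]; case=> [|[|[|[|?]]]] //= _ _;
  rewrite ?mxE ?sum4 ?mxE ?inordK //=.

Definition xxX (X : 'M[R]_4) : nat -> nat -> R := fun k l =>
  X (inord (if k == 0%N then 0%N else 2%N)) (inord (if l == 0%N then 0%N else 2%N)).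
Definition xyX (X : 'M[R]_4) : nat -> nat -> R := fun k l =>
  X (inord (if k == 0%N then 1%N else 3%N)) (inord (if l == 0%N then 0%N else 2%N)).

Lemma decompX (X : 'M[R]_4) M p q :
  lieb X (Ej id2) = p *: Ej id2 + q *: Ej M -> X = Ei (xxX X) + Ej (xyX X).
Proof.
move=> H.
have hE (a b : nat) : (lieb X (Ej id2)) (inord a) (inord b) =
   (p *: Ej id2 + q *: Ej M) (inord a) (inord b) by rewrite H.
have H00 := hE 0%N 0%N; have H01 := hE 0%N 1%N; have H10 := hE 1%N 0%N.
have H02 := hE 0%N 2%N; have H03 := hE 0%N 3%N; have H12 := hE 1%N 2%N.
have H20 := hE 2%N 0%N; have H21 := hE 2%N 1%N; have H30 := hE 3%N 0%N.
have H22 := hE 2%N 2%N; have H23 := hE 2%N 3%N; have H32 := hE 3%N 2%N.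
move: H00 H01 H10 H02 H03 H12 H20 H21 H30 H22 H23 H32.
rewrite /lieb /Ej /id2 /m2 ?mxE ?sum4 ?mxE ?inordK //= => H00 H01 H10 H02 H03 H12 H20 H21 H30 H22 H23 H32.
rewrite /Ei /Ej /xxX /xyX; t44; lra.
Qed.

End Cartan2.

Section Cartan3.
Variable R : realType.
Implicit Types n : nat -> nat -> R.

Ltac t44 := apply: eq44; case=> [|[|[|[|?]]]]; case=> [|[|[|[|?]]]] //= _ _;
  rewrite ?mxE ?sum4 ?mxE ?inordK //=.

Variables (d0 d1 m00 m01 m10 m11 : R).
Hypotheses (hd0 : d0 != 0) (hd1 : d1 != 0) (hm : d0 * m01 = d1 * m10)
  (hdisc : (m00 - m11)^+2 + 4 * (m01 * m10) != 0).
Let M := m2 m00 m01 m10 m11.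

Lemma in_sp_lin c1 c2 : in_sp (Ej (dg d0 d1)) (Ej (lin2 c1 c2 M)).
Proof.
have h := congr1 (fun z => c2 * z) hm; rewrite /= in h.
rewrite /in_sp /Ej /dg /lin2 /id2 /M /m2; t44; lra.
Qed.

Lemma lieb_lin c1 c2 c1' c2' : lieb (Ej (lin2 c1 c2 M)) (Ej (lin2 c1' c2' M)) = 0.
Proof. rewrite /lieb /Ej /lin2 /id2 /M /m2; t44; ring. Qed.

Lemma normal_main (X : 'M[R]_4) : in_sp (Ej (dg d0 d1)) X ->
  (forall Y, span2 (Ej id2) (Ej M) Y -> span2 (Ej id2) (Ej M) (lieb X Y)) ->
  span2 (Ej id2) (Ej M) X.
Proof.
move=> hsp hN.
have [p1 [q1 HL]] : span2 (Ej id2) (Ej M) (lieb X (Ej id2)).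
  by apply: hN; exists 1, 0; rewrite scale1r scale0r addr0.
have [p2 [q2 HH]] : span2 (Ej id2) (Ej M) (lieb X (Ej M)).
  by apply: hN; exists 0, 1; rewrite scale1r scale0r add0r.
have XE := decompX HL.
rewrite XE lieb_EE span_Ej in HH.
have {}HH : Ej (fun k l => mul2 (xxX X) M k l - mul2 M (xxX X) k l) +
  Ei (fun k l => mul2 M (xyX X) k l - mul2 (xyX X) M k l) = Ej (lin2 p2 q2 M) + Ei f0.
  by rewrite Ei0 addr0.
move: hsp; rewrite /in_sp XE sp_EE => hsp.
have {}hsp : Ej (fun k l => mul2 (fun a b => xxX X b a) (dg d0 d1) k l + mul2 (dg d0 d1) (xxX X) k l) +
  Ei (fun k l => mul2 (fun a b => xyX X b a) (dg d0 d1) k l - mul2 (dg d0 d1) (xyX X) k l) =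
  Ej f0 + Ei f0 by rewrite Ej0 Ei0 addr0.
have [A00 B00] := EE_inj HH (k:=0) (l:=0) isT isT.
have [A01 B01] := EE_inj HH (k:=0) (l:=1) isT isT.
have [A10 B10] := EE_inj HH (k:=1) (l:=0) isT isT.
have [A11 B11] := EE_inj HH (k:=1) (l:=1) isT isT.
have [S00 T00] := EE_inj hsp (k:=0) (l:=0) isT isT.
have [S01 T01] := EE_inj hsp (k:=0) (l:=1) isT isT.
have [S10 T10] := EE_inj hsp (k:=1) (l:=0) isT isT.
have [S11 T11] := EE_inj hsp (k:=1) (l:=1) isT isT.
rewrite /dg /mul2 /lin2 /id2 /M /m2 /xxX /xyX /f0 /= in A00 B00 A01 B01 A10 B10 A11 B11 S00 T00 S01 T01 S10 T10 S11 T11.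
have [[a00z [a01z [a10z a11z]]] [u [v [b00e [b01e [b10e b11e]]]]]] :=
  @key2 R d0 d1 m00 m01 m10 m11 p2 q2
   (X (inord 0) (inord 0)) (X (inord 0) (inord 2)) (X (inord 2) (inord 0)) (X (inord 2) (inord 2))
   (X (inord 1) (inord 0)) (X (inord 1) (inord 2)) (X (inord 3) (inord 0)) (X (inord 3) (inord 2))
   hd0 hd1 hm hdisc ltac:(lra) ltac:(lra) ltac:(lra) ltac:(lra) ltac:(lra) ltac:(lra)
   ltac:(lra) ltac:(lra) ltac:(lra) ltac:(lra).
exists u, v; rewrite XE span_Ej /Ej /Ei /lin2 /id2 /M /m2 /xxX /xyX; t44; lra.
Qed.

End Cartan3.

Section Cartan4.
Variable R : realType.
Implicit Types n : nat -> nat -> R.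

Ltac t44 := apply: eq44; case=> [|[|[|[|?]]]]; case=> [|[|[|[|?]]]] //= _ _;
  rewrite ?mxE ?sum4 ?mxE ?inordK //=.

Lemma span2_lin (M : nat -> nat -> R) Y :
  span2 (Ej id2) (Ej M) Y <-> exists c1 c2, Y = Ej (lin2 c1 c2 M).
Proof.
split=> -[c1 [c2 ->]]; exists c1, c2; by rewrite span_Ej.
Qed.

Lemma cartan_gen (d0 d1 m00 m01 m10 m11 : R) :
  d0 != 0 -> d1 != 0 -> d0 * m01 = d1 * m10 ->
  (m00 - m11)^+2 + 4 * (m01 * m10) != 0 ->
  cartan_subalgebra (Ej (dg d0 d1)) (span2 (Ej id2) (Ej (m2 m00 m01 m10 m11))).
Proof.
move=> hd0 hd1 hm hdisc.
set M := m2 m00 m01 m10 m11.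
have hlie : forall X Y, span2 (Ej id2) (Ej M) X -> span2 (Ej id2) (Ej M) Y -> lieb X Y = 0.
  move=> X Y /span2_lin [c1 [c2 ->]] /span2_lin [c1' [c2' ->]].
  exact: lieb_lin.
have h0 : span2 (Ej id2) (Ej M) 0 by exists 0, 0; rewrite !scale0r addr0.
split.
  move=> X /span2_lin [c1 [c2 ->]]; exact: in_sp_lin.
split.
  move=> X Y [c1 [c2 ->]] [c1' [c2' ->]]; exists (c1 + c1'), (c2 + c2').
  by rewrite !scalerDl addrACA.
split.
  move=> c X [c1 [c2 ->]]; exists (c * c1), (c * c2).
  by rewrite scalerDr !scalerA.
split; first exact: h0.
split; first by move=> X Y hX hY; rewrite (hlie X Y hX hY).
split.
  exists 1%N => -[|x [|? ?]] //= Y _ hx hY.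
  by apply: hlie => //; apply: hx; rewrite mem_seq1.
exact: normal_main.
Qed.

Lemma Ej_ext n n' : (forall k l : nat, (k < 2)%N -> (l < 2)%N -> n k l = n' k l) -> Ej n = Ej n'.
Proof.
move=> h; rewrite /Ej; t44; rewrite ?h //.
Qed.

Lemma lieb_Ei (xx N : nat -> nat -> R) :
  lieb (Ei xx) (Ej N) = Ej (fun k l => mul2 xx N k l - mul2 N xx k l).
Proof. rewrite /lieb /Ej /Ei /mul2; t44; ring. Qed.

Lemma degen_gen (d0 d1 m00 m01 m10 m11 : R) :
  d0 != 0 -> d1 != 0 -> d0 * m01 = d1 * m10 -> m01 != 0 ->
  (m00 - m11)^+2 + 4 * (m01 * m10) = 0 ->
  ~ cartan_subalgebra (Ej (dg d0 d1)) (span2 (Ej id2) (Ej (m2 m00 m01 m10 m11))).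
Proof.
move=> hd0 hd1 hm h01 hdisc [_ [_ [_ [_ [_ [_ hnorm]]]]]].
set M := m2 m00 m01 m10 m11.
have hdn : m00 - m11 != 0.
  apply/eqP => hz; move: hdisc; rewrite hz expr0n /= add0r => /eqP.
  rewrite mulf_eq0 /= pnatr_eq0 /= mulf_eq0 (negbTE h01) /= => /eqP m10z.
  by move: hm; rewrite m10z mulr0 => /eqP; rewrite mulf_eq0 (negbTE hd0) (negbTE h01).
set X := Ei (m2 0 d1 (- d0) 0).
have : span2 (Ej id2) (Ej M) X.
  apply: hnorm.
    rewrite /in_sp /X /Ei /Ej /dg /m2; t44; lra.
  move=> Y /span2_lin [c1 [c2 ->]].
  set b := c2 * (4 * (d0 * m01) / (m00 - m11)).
  have hb : b * (m00 - m11) = 4 * c2 * d0 * m01 by rewrite /b; field.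
  clearbody b.
  apply/span2_lin; exists (- b * (m00 + m11) / 2), b.
  rewrite lieb_Ei; apply: Ej_ext => k l hk hl.
  have e1 := congr1 (fun z => z * (m00 - m11)) hb.
  have e2 := congr1 (fun z => z * m01) hb.
  have e3 := congr1 (fun z => z * m10) hb.
  have e4 := congr1 (fun z => c2 * d1 * z) hdisc.
  have e5 := congr1 (fun z => c2 * d0 * z) hdisc.
  have e6 := congr1 (fun z => 4 * c2 * m01 * z) hm.
  have e7 := congr1 (fun z => c2 * z * (m00 - m11)) hm.
  rewrite /= in e1 e2 e3 e4 e5 e6 e7.
  apply: (mulIf hdn).
  move: hk hl; case: k => [|[|]] //; case: l => [|[|]] // _ _;
    rewrite /mul2 /lin2 /id2 /M /m2 /=; lra.
move=> [c1 [c2 E]].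
have := congr1 (fun A : 'M[R]_4 => A (inord 0) (inord 2)) E.
rewrite /X /Ei /Ej /m2 !mxE !inordK //= => h.
by move/eqP: hd1; apply; lra.
Qed.

End Cartan4.

Section Eig.
Variable R : realType.
Local Notation C := (R[i]).
Local Notation rc x := ((x%:C)%C : C).
Local Notation ii := (Complex (0 : R) 1).

Lemma sum4g (T : nmodType) (F : 'I_4 -> T) :
  \sum_(k < 4) F k = F (inord 0) + F (inord 1) + F (inord 2) + F (inord 3).
Proof.
rewrite !big_ord_recl big_ord0 addr0 !addrA.
by congr (_ + _ + _ + _); apply: congr1; apply: val_inj; rewrite /= inordK.
Qed.

Lemma ii2 : ii * ii = -1 :> C.
Proof. by rewrite -expr2 sqr_i. Qed.

Definition chr (n00 n01 n10 n11 : R) (mu : C) : C :=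
  mu ^+ 2 - (rc (n00 + n11)) * mu + (rc (n00 * n11 - n01 * n10)).

Lemma chrE n00 n01 n10 n11 mu :
  chr n00 n01 n10 n11 mu = ((rc n00) - mu) * ((rc n11) - mu) - (rc n01) * (rc n10).
Proof. rewrite /chr !rmorphB !rmorphD !rmorphM /=; ring. Qed.

Lemma fc_eq (c l v0 v1 v2 v3 a b x y : C) : c * c = -1 ->
  v1 * a + v3 * b = l * x -> - (v0 * a) - v2 * b = l * y ->
  (v0 + c * v1) * a + (v2 + c * v3) * b = (c * l) * (x + c * y).
Proof.
move=> hc e0 e1; apply/eqP; rewrite -subr_eq0; apply/eqP.
have -> : (v0 + c * v1) * a + (v2 + c * v3) * b - c * l * (x + c * y) =
  - (- (v0 * a) - v2 * b - l * y) + c * (v1 * a + v3 * b - l * x) - (c * c + 1) * l * y by ring.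
by rewrite e0 e1 hc; ring.
Qed.

Lemma chr_left n00 n01 n10 n11 (f0 f1 mu : C) :
  f0 * rc n00 + f1 * rc n10 = mu * f0 -> f0 * rc n01 + f1 * rc n11 = mu * f1 ->
  (f0 != 0) || (f1 != 0) -> chr n00 n01 n10 n11 mu = 0.
Proof.
move=> F0 F1 hf.
have h0 : f0 * chr n00 n01 n10 n11 mu = 0.
  rewrite chrE.
  have -> : f0 * ((rc n00 - mu) * (rc n11 - mu) - rc n01 * rc n10) =
    (rc n11 - mu) * (f0 * rc n00 + f1 * rc n10 - mu * f0) - rc n10 * (f0 * rc n01 + f1 * rc n11 - mu * f1) by ring.
  by rewrite F0 F1 !subrr !mulr0 subrr.
have h1 : f1 * chr n00 n01 n10 n11 mu = 0.
  rewrite chrE.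
  have -> : f1 * ((rc n00 - mu) * (rc n11 - mu) - rc n01 * rc n10) =
    (rc n00 - mu) * (f0 * rc n01 + f1 * rc n11 - mu * f1) - rc n01 * (f0 * rc n00 + f1 * rc n10 - mu * f0) by ring.
  by rewrite F0 F1 !subrr !mulr0 subrr.
case/orP: hf => hf.
  by move/eqP: h0; rewrite mulf_eq0 (negbTE hf) => /eqP.
by move/eqP: h1; rewrite mulf_eq0 (negbTE hf) => /eqP.
Qed.

Lemma left_eig n00 n01 n10 n11 (mu : C) : chr n00 n01 n10 n11 mu = 0 ->
  exists w0 w1 : C, ((w0 != 0) || (w1 != 0)) /\
    w0 * rc n00 + w1 * rc n10 = mu * w0 /\ w0 * rc n01 + w1 * rc n11 = mu * w1.
Proof.
move=> hc.
have [n10z|n10n] := eqVneq n10 0.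
  subst n10.
  have [mun|mun] := eqVneq mu (rc n11).
    exists 0, 1; rewrite oner_neq0 orbT; split => //.
    by rewrite mun rmorph0; split; ring.
  have hm : rc n00 - mu = 0.
    have hn : rc n11 - mu != 0 by rewrite subr_eq0 eq_sym.
    move: hc; rewrite chrE rmorph0 mulr0 subr0 => /eqP; rewrite mulf_eq0.
    by rewrite (negbTE hn) orbF => /eqP.
  exists (rc n00 - rc n11), (rc n01); split.
    by rewrite (_ : rc n00 = mu) ?subr_eq0 ?mun //; apply/eqP; rewrite -subr_eq0 hm.
  rewrite rmorph0; split.
    apply/eqP; rewrite -subr_eq0; apply/eqP.
    have -> : (rc n00 - rc n11) * rc n00 + rc n01 * 0 - mu * (rc n00 - rc n11) =
      (rc n00 - rc n11) * (rc n00 - mu) by ring.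
    by rewrite hm mulr0.
  apply/eqP; rewrite -subr_eq0; apply/eqP.
  have -> : (rc n00 - rc n11) * rc n01 + rc n01 * rc n11 - mu * rc n01 =
    rc n01 * (rc n00 - mu) by ring.
  by rewrite hm mulr0.
exists (rc n10), (mu - rc n00); split.
  by rewrite fmorph_eq0 n10n.
split; first by ring.
apply/eqP; rewrite -subr_eq0; apply/eqP.
have -> : rc n10 * rc n01 + (mu - rc n00) * rc n11 - mu * (mu - rc n00) =
  - chr n00 n01 n10 n11 mu by rewrite chrE; ring.
by rewrite hc oppr0.
Qed.

End Eig.

Section Eig2.
Variable R : realType.
Local Notation C := (R[i]).
Local Notation rc x := ((x%:C)%C : C).
Local Notation ii := (Complex (0 : R) 1).

Lemma vK_entries n00 n01 n10 n11 (v : 'rV[C]_4) :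
  let K := map_mx (fun x : R => (x%:C)%C) (Ej (m2 n00 n01 n10 n11)) in
  let w k := v ord0 (inord k) in
  [/\ (v *m K) ord0 (inord 0) = w 1%N * rc n00 + w 3%N * rc n10,
      (v *m K) ord0 (inord 1) = - (w 0%N * rc n00) - w 2%N * rc n10,
      (v *m K) ord0 (inord 2) = w 1%N * rc n01 + w 3%N * rc n11 &
      (v *m K) ord0 (inord 3) = - (w 0%N * rc n01) - w 2%N * rc n11].
Proof.
move=> K w; rewrite /K /w /Ej /m2.
by split; rewrite !mxE sum4g !mxE !inordK //= ?rmorph0 ?rmorphN; ring.
Qed.

Lemma row4_eq0 (v : 'rV[C]_4) : v ord0 (inord 0) = 0 -> v ord0 (inord 1) = 0 ->
  v ord0 (inord 2) = 0 -> v ord0 (inord 3) = 0 -> v = 0.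
Proof.
move=> h0 h1 h2 h3; apply/rowP => j; rewrite mxE -(inord_val j).
by case: j => [[|[|[|[|?]]]] ?] //=.
Qed.

Lemma row4_eq (u u' : 'rV[C]_4) :
  (forall k : nat, (k < 4)%N -> u ord0 (inord k) = u' ord0 (inord k)) -> u = u'.
Proof.
move=> h; apply/eqP; rewrite -subr_eq0; apply/eqP.
by apply: row4_eq0; rewrite !mxE h // subrr.
Qed.

Lemma ii_neq0 : ii != 0 :> C.
Proof. by apply/eqP => h; move: (ii2 R); rewrite h mul0r => /eqP; rewrite eq_sym oppr_eq0 oner_eq0. Qed.

Lemma both0 (x y : C) : x + - ii * y = 0 -> x + ii * y = 0 -> x = 0 /\ y = 0.
Proof.
move=> h1 h2.
have hx : x *+ 2 = 0.
  have -> : x *+ 2 = (x + - ii * y) + (x + ii * y) by rewrite mulr2n; ring.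
  by rewrite h1 h2 addr0.
have x0 : x = 0 by move/eqP: hx; rewrite mulrn_eq0 /= => /eqP.
split => //; move: h2; rewrite x0 add0r => /eqP; rewrite mulf_eq0 (negbTE ii_neq0) /=.
by move/eqP.
Qed.

Lemma ceig_Ej n00 n01 n10 n11 (l : C) :
  ceig (Ej (m2 n00 n01 n10 n11)) l <->
  exists mu, chr n00 n01 n10 n11 mu = 0 /\ (l = ii * mu \/ l = - (ii * mu)).
Proof.
rewrite /ceig; split.
- move/eigenvalueP => [v hv vn0].
  have [e0 e1 e2 e3] := vK_entries n00 n01 n10 n11 v.
  have E k : (v *m map_mx (fun x : R => (x%:C)%C) (Ej (m2 n00 n01 n10 n11))) ord0 (inord k)
     = l * v ord0 (inord k) by rewrite hv mxE.
  have c0 := etrans (esym e0) (E 0%N).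
  have c1 := etrans (esym e1) (E 1%N).
  have c2 := etrans (esym e2) (E 2%N).
  have c3 := etrans (esym e3) (E 3%N).
  have hc1 : (- ii) * (- ii) = -1 :> C by rewrite mulrNN ii2.
  have F0 := fc_eq hc1 c0 c1; have F1 := fc_eq hc1 c2 c3.
  have G0 := fc_eq (ii2 R) c0 c1; have G1 := fc_eq (ii2 R) c2 c3.
  have [hf|hf] := boolP ((v ord0 (inord 0) + - ii * v ord0 (inord 1) != 0) ||
                         (v ord0 (inord 2) + - ii * v ord0 (inord 3) != 0)).
    exists (- ii * l); split; first exact: chr_left F0 F1 hf.
    by left; rewrite mulrA mulrN ii2 opprK mul1r.
  have [hg|hg] := boolP ((v ord0 (inord 0) + ii * v ord0 (inord 1) != 0) ||
                         (v ord0 (inord 2) + ii * v ord0 (inord 3) != 0)).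
    exists (ii * l); split; first exact: chr_left G0 G1 hg.
    by right; rewrite mulrA ii2 mulN1r opprK.
  exfalso; move: hf hg; rewrite !negb_or !negbK => /andP [/eqP f0 /eqP f1] /andP [/eqP g0 /eqP g1].
  have [z0 z1] := both0 f0 g0; have [z2 z3] := both0 f1 g1.
  by move/eqP: vn0; apply; apply: row4_eq0.
- case=> mu [hchr hl].
  have [d [hd hld]] : exists d : C, d * d = -1 /\ l = d * mu.
    case: hl => ->; first by exists ii; rewrite ii2.
    by exists (- ii); rewrite mulrNN ii2 mulNr.
  have [w0 [w1 [hw [W0 W1]]]] := left_eig hchr.
  apply/eigenvalueP; exists (\row_(j < 4) nth 0 [:: w0; d * w0; w1; d * w1] j); last first.
    apply/eqP => h; move: hw.
    have := congr1 (fun u : 'rV[C]_4 => u ord0 (inord 0)) h.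
    have := congr1 (fun u : 'rV[C]_4 => u ord0 (inord 2)) h.
    by rewrite !mxE !inordK //= => -> ->; rewrite eqxx.
  set v := \row_(j < 4) _.
  have [e0 e1 e2 e3] := vK_entries n00 n01 n10 n11 v.
  apply: row4_eq => k hk.
  move: hk e0 e1 e2 e3; case: k => [|[|[|[|k]]]] // _ e0 e1 e2 e3;
    rewrite ?e0 ?e1 ?e2 ?e3 /v !mxE !inordK //= hld.
  + apply/eqP; rewrite -subr_eq0; apply/eqP.
    have -> : d * w0 * rc n00 + d * w1 * rc n10 - d * mu * w0 =
      d * (w0 * rc n00 + w1 * rc n10 - mu * w0) by ring.
    by rewrite W0 subrr mulr0.
  + apply/eqP; rewrite -subr_eq0; apply/eqP.
    have -> : - (w0 * rc n00) - w1 * rc n10 - d * mu * (d * w0) =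
      - (w0 * rc n00 + w1 * rc n10 - mu * w0) - (d * d + 1) * (mu * w0) by ring.
    by rewrite W0 hd; ring.
  + apply/eqP; rewrite -subr_eq0; apply/eqP.
    have -> : d * w0 * rc n01 + d * w1 * rc n11 - d * mu * w1 =
      d * (w0 * rc n01 + w1 * rc n11 - mu * w1) by ring.
    by rewrite W1 subrr mulr0.
  + apply/eqP; rewrite -subr_eq0; apply/eqP.
    have -> : - (w0 * rc n01) - w1 * rc n11 - d * mu * (d * w1) =
      - (w0 * rc n01 + w1 * rc n11 - mu * w1) - (d * d + 1) * (mu * w1) by ring.
    by rewrite W1 hd; ring.
Qed.

End Eig2.

Section Eig3.
Variable R : realType.
Local Notation C := (R[i]).
Local Notation rc x := ((x%:C)%C : C).
Local Notation ii := (Complex (0 : R) 1).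

Lemma addCE (a b c d : R) : (Complex a b + Complex c d) = Complex (a + c) (b + d) :> C.
Proof. by []. Qed.
Lemma mulCE (a b c d : R) : (Complex a b * Complex c d) = Complex (a * c - b * d) (a * d + b * c) :> C.
Proof. by []. Qed.
Lemma oppCE (a b : R) : - (Complex a b) = Complex (-a) (-b) :> C.
Proof. by []. Qed.
Lemma rcE (a : R) : rc a = Complex a 0.
Proof. by []. Qed.
Lemma iiC (a b : R) : ii * Complex a b = Complex (- b) a.
Proof. by rewrite mulCE; congr Complex; ring. Qed.

Lemma lin2_m2 c1 c2 (m00 m01 m10 m11 : R) :
  c1 *: Ej id2 + c2 *: Ej (m2 m00 m01 m10 m11) =
  Ej (m2 (c1 + c2 * m00) (c2 * m01) (c2 * m10) (c1 + c2 * m11)).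
Proof.
rewrite span_Ej; apply: Ej_ext => k l hk hl.
by move: hk hl; case: k => [|[|]] //; case: l => [|[|]] // _ _; rewrite /lin2 /id2 /m2 /=; ring.
Qed.

Lemma chr_fact n00 n01 n10 n11 (z1 z2 mu : C) :
  z1 + z2 = rc (n00 + n11) -> z1 * z2 = rc (n00 * n11 - n01 * n10) ->
  chr n00 n01 n10 n11 mu = (mu - z1) * (mu - z2).
Proof. by move=> h1 h2; rewrite /chr -h1 -h2; ring. Qed.

Lemma root2 (z1 z2 mu : C) : (mu - z1) * (mu - z2) = 0 -> mu = z1 \/ mu = z2.
Proof. by move/eqP; rewrite mulf_eq0 !subr_eq0 => /orP [] /eqP; [left|right]. Qed.

Lemma EE_gen (m00 m01 m10 m11 : R) : 0 < (m00 - m11)^+2 + 4 * (m01 * m10) ->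
  exists c1 c2, is_EE_matrix (c1 *: Ej id2 + c2 *: Ej (m2 m00 m01 m10 m11)).
Proof.
move=> hdisc.
set disc := (m00 - m11)^+2 + 4 * (m01 * m10) in hdisc.
set s := Num.sqrt disc.
have s0 : 0 < s by rewrite sqrtr_gt0.
have s2 : s ^+ 2 = disc by rewrite sqr_sqrtr // ltW.
set c := `|(m00 + m11 + s) / 2| + `|(m00 + m11 - s) / 2| + 1.
set mu1 := c + (m00 + m11 + s) / 2.
set mu2 := c + (m00 + m11 - s) / 2.
have h1 : 0 < mu1.
  have := ler_norm (- ((m00 + m11 + s) / 2)); have := normr_ge0 ((m00 + m11 - s) / 2).
  rewrite normrN /mu1 /c; lra.
have h2 : 0 < mu2.
  have := ler_norm (- ((m00 + m11 - s) / 2)); have := normr_ge0 ((m00 + m11 + s) / 2).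
  rewrite normrN /mu2 /c; lra.
exists c, 1; rewrite lin2_m2 !mul1r.
exists mu1, mu2; split; first by rewrite gt_eqF.
split; first by rewrite gt_eqF.
split; first by apply/eqP; rewrite /mu1 /mu2; lra.
split.
  rewrite /= !inE !eq_complex /= !eqxx /= !negb_or.
  have n1 : mu1 != - mu1 by apply/eqP; lra.
  have n2 : mu2 != - mu2 by apply/eqP; lra.
  have n3 : mu1 != mu2 by apply/eqP; rewrite /mu1 /mu2; lra.
  have n4 : mu1 != - mu2 by apply/eqP; lra.
  have n5 : - mu1 != mu2 by apply/eqP; lra.
  have n6 : - mu1 != - mu2 by apply/eqP; rewrite /mu1 /mu2; lra.
  by rewrite n1 n2 n3 n4 n5 n6.
have hs : rc mu1 + rc mu2 = rc ((c + m00) + (c + m11)).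
  by rewrite -rmorphD; congr (rc _); rewrite /mu1 /mu2; lra.
have hp : rc mu1 * rc mu2 = rc ((c + m00) * (c + m11) - m01 * m10).
  rewrite -rmorphM; congr (rc _); rewrite /mu1 /mu2.
  move: s2; rewrite /disc => s2'. 
  have -> : (c + (m00 + m11 + s) / 2) * (c + (m00 + m11 - s) / 2) =
    (c + (m00 + m11) / 2) ^+ 2 - s ^+ 2 / 4 by field.
  by rewrite s2'; field.
move=> l; rewrite ceig_Ej; split.
  case=> mu [hchr hl].
  rewrite (chr_fact _ hs hp) in hchr.
  rewrite !inE.
  case: (root2 hchr) => E; rewrite {}E rcE iiC oppCE oppr0 in hl;
    case: hl => ->; apply/or4P;
    first [ by constructor 1; apply/eqP; congr Complex; rewrite ?oppr0
          | by constructor 2; apply/eqP; congr Complex; rewrite ?oppr0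
          | by constructor 3; apply/eqP; congr Complex; rewrite ?oppr0
          | by constructor 4; apply/eqP; congr Complex; rewrite ?oppr0 ].
rewrite !inE => /or4P [] /eqP ->.
- exists (rc mu1); split; first by rewrite (chr_fact _ hs hp) subrr mul0r.
  by left; rewrite rcE iiC; congr Complex; rewrite ?oppr0.
- exists (rc mu1); split; first by rewrite (chr_fact _ hs hp) subrr mul0r.
  by right; rewrite rcE iiC oppCE; congr Complex; rewrite ?oppr0 ?opprK.
- exists (rc mu2); split; first by rewrite (chr_fact _ hs hp) subrr mulr0.
  by left; rewrite rcE iiC; congr Complex; rewrite ?oppr0.
- exists (rc mu2); split; first by rewrite (chr_fact _ hs hp) subrr mulr0.
  by right; rewrite rcE iiC oppCE; congr Complex; rewrite ?oppr0 ?opprK.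
Qed.

Lemma FF_gen (m00 m01 m10 m11 : R) : (m00 - m11)^+2 + 4 * (m01 * m10) < 0 ->
  exists c1 c2, is_FF_matrix (c1 *: Ej id2 + c2 *: Ej (m2 m00 m01 m10 m11)).
Proof.
move=> hdisc.
set disc := (m00 - m11)^+2 + 4 * (m01 * m10) in hdisc.
set w := Num.sqrt (- disc) / 2.
have w0 : 0 < w by rewrite /w divr_gt0 // sqrtr_gt0 oppr_gt0.
have w2 : w ^+ 2 * 4 = - disc.
  rewrite /w expr_div_n sqr_sqrtr; last by rewrite oppr_ge0 ltW.
  by field.
set c := 1 - (m00 + m11) / 2.
exists c, 1; rewrite lin2_m2 !mul1r.
exists w, 1; split; first by rewrite gt_eqF.
split; first by rewrite oner_eq0.
have hs : Complex 1 w + Complex 1 (- w) = rc ((c + m00) + (c + m11)).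
  by rewrite addCE rcE; congr Complex; rewrite /c; field.
have hp : Complex 1 w * Complex 1 (- w) = rc ((c + m00) * (c + m11) - m01 * m10).
  rewrite mulCE rcE; congr Complex; last by ring.
  move: w2; rewrite /disc /c => w2'.
  have -> : 1 * 1 - w * - w = 1 + (w ^+ 2 * 4) / 4 by field.
  by rewrite w2'; field.
move=> l; rewrite ceig_Ej; split.
  case=> mu [hchr hl].
  rewrite (chr_fact _ hs hp) in hchr.
  rewrite !inE.
  case: (root2 hchr) => E; rewrite {}E iiC oppCE in hl;
    case: hl => ->; apply/or4P;
    first [ by constructor 1; apply/eqP; congr Complex; rewrite ?opprK
          | by constructor 2; apply/eqP; congr Complex; rewrite ?opprK
          | by constructor 3; apply/eqP; congr Complex; rewrite ?opprK
          | by constructor 4; apply/eqP; congr Complex; rewrite ?opprK ].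
rewrite !inE => /or4P [] /eqP ->.
- exists (Complex 1 (- w)); split; first by rewrite (chr_fact _ hs hp) subrr mulr0.
  by left; rewrite iiC; congr Complex; rewrite ?opprK.
- exists (Complex 1 w); split; first by rewrite (chr_fact _ hs hp) subrr mul0r.
  by right; rewrite iiC oppCE; congr Complex; rewrite ?opprK.
- exists (Complex 1 w); split; first by rewrite (chr_fact _ hs hp) subrr mul0r.
  by left; rewrite iiC; congr Complex; rewrite ?opprK.
- exists (Complex 1 (- w)); split; first by rewrite (chr_fact _ hs hp) subrr mulr0.
  by right; rewrite iiC oppCE; congr Complex; rewrite ?opprK.
Qed.

End Eig3.

Section Calc.
Variable R : realType.
Variable V : normedModType R.
Implicit Types (f g : V -> R) (a v : V).

Lemma derive_lineE f a v : 'D_v f a = 'D_1 (fun h : R => f (h *: v + a)) 0.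
Proof.
rewrite /derive; set g1 := fun h => h^-1 *: _; set g2 := fun h => h^-1 *: _.
suff -> : g1 = g2 by [].
rewrite funeqE /g1 /g2 => h /=; rewrite addr0 scale0r add0r.
congr (_ *: (f (_ *: _ + _) - _)); exact: (esym (mulr1 h)).
Qed.

Lemma is_derive_lineP f a v df :
  is_derive a v f df <-> is_derive (0 : R) 1 (fun h : R => f (h *: v + a)) df.
Proof.
split=> -[d e]; split.
- by move/derivable1P: d.
- by rewrite -derive_lineE.
- by apply/derivable1P.
- by rewrite derive_lineE.
Qed.

Lemma is_derive_comp1 f (G : R -> R) a v df dG :
  is_derive a v f df -> is_derive (f a) 1 G dG ->
  is_derive a v (fun x => G (f x)) (dG * df).
Proof.
move=> /is_derive_lineP hf hG; apply/is_derive_lineP.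
have e : (fun h : R => G (f (h *: v + a))) = G \o (fun h : R => f (h *: v + a)) by [].
rewrite e; apply: is_derive1_comp => //.
by rewrite scale0r add0r.
Qed.

Lemma isdD f g a v df dg : is_derive a v f df -> is_derive a v g dg ->
  is_derive a v (fun x => f x + g x) (df + dg).
Proof. move=> hf hg; exact: (is_deriveD hf hg). Qed.

Lemma isdB f g a v df dg : is_derive a v f df -> is_derive a v g dg ->
  is_derive a v (fun x => f x - g x) (df - dg).
Proof. move=> hf hg; exact: (is_deriveB hf hg). Qed.

Lemma isdN f a v df : is_derive a v f df -> is_derive a v (fun x => - f x) (- df).
Proof. move=> hf; exact: (is_deriveN hf). Qed.

Lemma isdM f g a v df dg : is_derive a v f df -> is_derive a v g dg ->
  is_derive a v (fun x => f x * g x) (f a * dg + g a * df).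
Proof. move=> hf hg; exact: (is_deriveM hf hg). Qed.

Lemma isdZ (k : R) f a v df : is_derive a v f df -> is_derive a v (fun x => k * f x) (k * df).
Proof. move=> hf; exact: (is_deriveZ k hf). Qed.

Lemma isdC (k : R) a v : is_derive a v (fun _ => k) 0.
Proof. exact: is_derive_cst. Qed.

Lemma isdV f a v df : f a != 0 -> is_derive a v f df ->
  is_derive a v (fun x => (f x)^-1) (- (f a)^-2 * df).
Proof.
move=> fa [d e]; split; first exact: derivableV.
by rewrite deriveV // e.
Qed.

Lemma isd_sqrt f a v df : 0 < f a -> is_derive a v f df ->
  is_derive a v (fun x => Num.sqrt (f x)) ((2 * Num.sqrt (f a))^-1 * df).
Proof. by move=> fa hf; apply: is_derive_comp1 => //; exact: is_derive1_sqrt. Qed.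

Lemma isd_ln f a v df : 0 < f a -> is_derive a v f df ->
  is_derive a v (fun x => ln (f x)) ((f a)^-1 * df).
Proof. by move=> fa hf; apply: is_derive_comp1 => //; exact: is_derive1_ln. Qed.

Lemma isd_eq f a v df df' : is_derive a v f df -> df = df' -> is_derive a v f df'.
Proof. by move=> h <-. Qed.

End Calc.

Section Calc2.
Variable R : realType.

Lemma near0_small n : nbhs (0 : ('rV[R]_n : normedModType R)) (fun r : 'rV[R]_n => forall k, `|r ord0 k| < 1/2).
Proof.
apply/nbhs_ballP; exists (1/2) => //= r [_ hr] k.
have := hr ord0 k; rewrite -ball_normE /= mxE sub0r normrN.
by [].
Qed.

Lemma isd_coord n (a v : 'rV[R]_n) k : is_derive a v (fun q : 'rV[R]_n => q ord0 k) (v ord0 k).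
Proof.
apply/is_derive_lineP.
have -> : (fun h : R => (h *: v + a) ord0 k) = (fun h => h * v ord0 k + a ord0 k).
  by rewrite funeqE => h; rewrite !mxE.
have H := isdD (isdM (@is_derive_id _ R 0 1) (isdC (v ord0 k) (0 : R) 1)) (isdC (a ord0 k) (0 : R) 1).
apply: (isd_eq H).
by rewrite /=; ring.
Qed.

End Calc2.

Section Chart.
Variable R : realType.
Implicit Types (a v w q : 'rV[R]_4).

Definition y01 q := 1 - co4 q 0 ^+ 2 - co4 q 1 ^+ 2.
Definition y23 q := 1 - co4 q 2 ^+ 2 - co4 q 3 ^+ 2.
Definition dy01 a v := - (2 * (co4 a 0 * co4 v 0 + co4 a 1 * co4 v 1)).
Definition dy23 a v := - (2 * (co4 a 2 * co4 v 2 + co4 a 3 * co4 v 3)).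
Definition S01 q := Num.sqrt (y01 q).
Definition S23 q := Num.sqrt (y23 q).
Definition dS01 a v := (2 * S01 a)^-1 * dy01 a v.
Definition dS23 a v := (2 * S23 a)^-1 * dy23 a v.

Lemma co4_0 k : co4 (0 : 'rV[R]_4) k = 0.
Proof. by rewrite /co4 mxE. Qed.

Lemma y01_0 : y01 0 = 1. Proof. by rewrite /y01 !co4_0 expr0n /= !subr0. Qed.
Lemma y23_0 : y23 0 = 1. Proof. by rewrite /y23 !co4_0 expr0n /= !subr0. Qed.
Lemma S01_0 : S01 0 = 1. Proof. by rewrite /S01 y01_0 sqrtr1. Qed.
Lemma S23_0 : S23 0 = 1. Proof. by rewrite /S23 y23_0 sqrtr1. Qed.
Lemma dy01_0 v : dy01 0 v = 0. Proof. by rewrite /dy01 !co4_0 !mul0r addr0 mulr0 oppr0. Qed.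
Lemma dy23_0 v : dy23 0 v = 0. Proof. by rewrite /dy23 !co4_0 !mul0r addr0 mulr0 oppr0. Qed.

Lemma isd_co4 a v k : is_derive a v (fun q : 'rV[R]_4 => co4 q k) (co4 v k).
Proof. exact: isd_coord. Qed.

Lemma isd_y01 a v : is_derive a v y01 (dy01 a v).
Proof.
have H := isdB (isdB (isdC 1 a v) (isdM (isd_co4 a v 0) (isd_co4 a v 0)))
   (isdM (isd_co4 a v 1) (isd_co4 a v 1)).
by apply: (isd_eq H); rewrite /dy01; ring.
Qed.

Lemma isd_y23 a v : is_derive a v y23 (dy23 a v).
Proof.
have H := isdB (isdB (isdC 1 a v) (isdM (isd_co4 a v 2) (isd_co4 a v 2)))
   (isdM (isd_co4 a v 3) (isd_co4 a v 3)).
by apply: (isd_eq H); rewrite /dy23; ring.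
Qed.

Lemma isd_S01 a v : 0 < y01 a -> is_derive a v S01 (dS01 a v).
Proof. by move=> h; exact: (isd_sqrt h (isd_y01 a v)). Qed.
Lemma isd_S23 a v : 0 < y23 a -> is_derive a v S23 (dS23 a v).
Proof. by move=> h; exact: (isd_sqrt h (isd_y23 a v)). Qed.

Lemma isd_dy01 v w : is_derive 0 w (fun a => dy01 a v) (dy01 w v).
Proof.
have H := isdN (isdZ 2 (isdD (isdM (isd_co4 0 w 0) (isdC (co4 v 0) 0 w))
                              (isdM (isd_co4 0 w 1) (isdC (co4 v 1) 0 w)))).
by apply: (isd_eq H); rewrite /dy01 !co4_0; ring.
Qed.
Lemma isd_dy23 v w : is_derive 0 w (fun a => dy23 a v) (dy23 w v).
Proof.
have H := isdN (isdZ 2 (isdD (isdM (isd_co4 0 w 2) (isdC (co4 v 2) 0 w))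
                              (isdM (isd_co4 0 w 3) (isdC (co4 v 3) 0 w)))).
by apply: (isd_eq H); rewrite /dy23 !co4_0; ring.
Qed.

Lemma isd_S01_0 w : is_derive 0 w S01 0.
Proof.
apply: (isd_eq (isd_S01 w _)); first by rewrite y01_0.
by rewrite /dS01 dy01_0 mulr0.
Qed.
Lemma isd_S23_0 w : is_derive 0 w S23 0.
Proof.
apply: (isd_eq (isd_S23 w _)); first by rewrite y23_0.
by rewrite /dS23 dy23_0 mulr0.
Qed.

Lemma isd_dS01 v w : is_derive 0 w (fun a => dS01 a v)
  (- (co4 v 0 * co4 w 0 + co4 v 1 * co4 w 1)).
Proof.
have h2 : 2 * S01 0 != 0 by rewrite S01_0 mulr1 pnatr_eq0.
have H := isdM (isdV (f := fun a => 2 * S01 a) h2 (isdZ 2 (isd_S01_0 w))) (isd_dy01 v w).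
apply: (isd_eq H); rewrite S01_0 dy01_0 /dy01 mulr1; field; by rewrite ?pnatr_eq0.
Qed.
Lemma isd_dS23 v w : is_derive 0 w (fun a => dS23 a v)
  (- (co4 v 2 * co4 w 2 + co4 v 3 * co4 w 3)).
Proof.
have h2 : 2 * S23 0 != 0 by rewrite S23_0 mulr1 pnatr_eq0.
have H := isdM (isdV (f := fun a => 2 * S23 a) h2 (isdZ 2 (isd_S23_0 w))) (isd_dy23 v w).
apply: (isd_eq H); rewrite S23_0 dy23_0 /dy23 mulr1; field; by rewrite ?pnatr_eq0.
Qed.

End Chart.

Section Chart2.
Variable R : realType.
Implicit Types (a v w q : 'rV[R]_4).
Variables (R1 R2 t s1 s2 : R).

Definition gL q := R1 * (s1 * S01 q) + R2 * ln (S23 q).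
Definition PL v a := R1 * (s1 * dS01 a v) + R2 * ((S23 a)^-1 * dS23 a v).
Definition D01 v w := - (co4 v 0 * co4 w 0 + co4 v 1 * co4 w 1).
Definition D23 v w := - (co4 v 2 * co4 w 2 + co4 v 3 * co4 w 3).
Definition BL v w := R1 * (s1 * D01 v w) + R2 * D23 v w.

Lemma S23_gt0 a : 0 < y23 a -> 0 < S23 a.
Proof. by move=> h; rewrite /S23 sqrtr_gt0. Qed.

Lemma isd_gL a v : 0 < y01 a -> 0 < y23 a -> is_derive a v gL (PL v a).
Proof.
move=> h1 h2.
have H := isdD (isdZ R1 (isdZ s1 (isd_S01 v h1)))
               (isdZ R2 (isd_ln (f := @S23 R) (S23_gt0 h2) (isd_S23 v h2))).
by apply: (isd_eq H).
Qed.

Lemma isd_PL v w : is_derive 0 w (PL v) (BL v w).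
Proof.
have hS : S23 (0 : 'rV[R]_4) != 0 by rewrite S23_0 oner_eq0.
have H := isdD (isdZ R1 (isdZ s1 (isd_dS01 v w)))
   (isdZ R2 (isdM (isdV (f := @S23 R) hS (isd_S23_0 w)) (isd_dS23 v w))).
apply: (isd_eq H).
by rewrite /BL /D01 /D23 /dS23 S23_0 dy23_0 invr1 !mulr0 mul1r addr0.
Qed.

Definition gH q := (1 - t) * (s1 * S01 q) +
  t * (co4 q 0 * co4 q 2 + co4 q 1 * co4 q 3 + (s1 * S01 q) * (s2 * S23 q)).
Definition PH v a := (1 - t) * (s1 * dS01 a v) +
  t * ((co4 a 0 * co4 v 2 + co4 a 2 * co4 v 0) + (co4 a 1 * co4 v 3 + co4 a 3 * co4 v 1) +
       ((s1 * S01 a) * (s2 * dS23 a v) + (s2 * S23 a) * (s1 * dS01 a v))).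
Definition BH v w := (1 - t) * (s1 * D01 v w) +
  t * ((co4 w 0 * co4 v 2 + co4 w 2 * co4 v 0) + (co4 w 1 * co4 v 3 + co4 w 3 * co4 v 1) +
       s1 * s2 * (D23 v w + D01 v w)).

Lemma isd_gH a v : 0 < y01 a -> 0 < y23 a -> is_derive a v gH (PH v a).
Proof.
move=> h1 h2.
have H := isdD (isdZ (1 - t) (isdZ s1 (isd_S01 v h1)))
  (isdZ t (isdD (isdD (isdM (isd_co4 a v 0) (isd_co4 a v 2)) (isdM (isd_co4 a v 1) (isd_co4 a v 3)))
     (isdM (isdZ s1 (isd_S01 v h1)) (isdZ s2 (isd_S23 v h2))))).
by apply: (isd_eq H); rewrite /PH; ring.
Qed.

Lemma isd_PH v w : is_derive 0 w (PH v) (BH v w).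
Proof.
have cst k := isdC (co4 v k) (0 : 'rV[R]_4) w.
have H := isdD (isdZ (1 - t) (isdZ s1 (isd_dS01 v w)))
  (isdZ t (isdD (isdD
     (isdD (isdM (isd_co4 0 w 0) (cst 2%N)) (isdM (isd_co4 0 w 2) (cst 0%N)))
     (isdD (isdM (isd_co4 0 w 1) (cst 3%N)) (isdM (isd_co4 0 w 3) (cst 1%N))))
   (isdD (isdM (isdZ s1 (isd_S01_0 w)) (isdZ s2 (isd_dS23 v w)))
         (isdM (isdZ s2 (isd_S23_0 w)) (isdZ s1 (isd_dS01 v w)))))).
apply: (isd_eq H).
rewrite /BH /D01 /D23 /dS01 /dS23 S01_0 S23_0 dy01_0 dy23_0 !co4_0; ring.
Qed.

End Chart2.

Section Hess.
Variable R : realType.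

Lemma small_pos (r : 'rV[R]_4) : (forall k, `|r ord0 k| < 1/2) -> 0 < y01 r /\ 0 < y23 r.
Proof.
move=> hr.
have h k : - (1/2) < co4 r k < 1/2 by rewrite /co4 -ltr_norml.
have /andP[a0 b0] := h 0%N; have /andP[a1 b1] := h 1%N.
have /andP[a2 b2] := h 2%N; have /andP[a3 b3] := h 3%N.
rewrite /y01 /y23; split; nra.
Qed.

Lemma hess_gen (g : 'rV[R]_4 -> R) (P B : 'rV[R]_4 -> 'rV[R]_4 -> R) :
  (forall v r, 0 < y01 r -> 0 < y23 r -> is_derive r v g (P v r)) ->
  (forall v w, is_derive 0 w (P v) (B v w)) ->
  hessian g (chart_pole R) = \matrix_(i < 4, j < 4) B (ebasis R i) (ebasis R j).
Proof.
move=> h1 h2; apply/matrixP => i j; rewrite !mxE /chart_pole.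
have E : \forall x \near (0 : ('rV[R]_4 : normedModType R)),
    'D_(ebasis R i) g x = P (ebasis R i) x.
  apply: filterS (near0_small R 4) => r hr.
  have [p1 p2] := small_pos hr.
  exact: (@derive_val _ _ _ _ _ _ _ (h1 (ebasis R i) r p1 p2)).
rewrite (near_eq_derive _ E).
exact: (@derive_val _ _ _ _ _ _ _ (h2 (ebasis R i) (ebasis R j))).
Qed.

End Hess.

Section Sys.
Variable R : realType.

Ltac t44 := apply: eq44; case=> [|[|[|[|?]]]]; case=> [|[|[|[|?]]]] //= _ _;
  rewrite ?mxE ?sum4 ?mxE ?inordK //=.

Lemma co6_mk6 (a b c d e f : R) (k : nat) : (k < 6)%N ->
  co6 (mk6 a b c d e f) k = nth 0 [:: a; b; c; d; e; f] k.
Proof. by move=> hk; rewrite /co6 /mk6 !mxE !inordK. Qed.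

Lemma sgnb2 e : sgnb R e * sgnb R e = 1.
Proof. by case: e; rewrite /sgnb ?mulr1 ?mulrNN ?mulr1. Qed.
Lemma sgnb_norm e : `|sgnb R e| = 1.
Proof. by case: e; rewrite /sgnb ?normrN normr1. Qed.

Lemma gL_eq (R1 R2 : R) e1 e2 :
  (fun q => bval (Lsys R1 R2) (chart_inv e1 e2 q)) = gL R1 R2 (sgnb R e1).
Proof.
rewrite funeqE => q; rewrite /bval /Lsys /chart_inv /=.
rewrite !co6_mk6 //=.
by rewrite /gL normrM sgnb_norm mul1r ger0_norm ?sqrtr_ge0.
Qed.

Lemma gH_eq (t : R) e1 e2 :
  (fun q => bval (Hsys t) (chart_inv e1 e2 q)) = gH t (sgnb R e1) (sgnb R e2).
Proof.
rewrite funeqE => q; rewrite /bval /Hsys /chart_inv /=.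
rewrite !co6_mk6 //=.
by rewrite mul0r addr0.
Qed.

Lemma co4_ebasis (k a : nat) : (k < 4)%N -> (a < 4)%N ->
  co4 (ebasis R (inord a)) k = (k == a)%:R.
Proof.
move=> hk ha; rewrite /co4 /ebasis mxE eqxx /=.
by rewrite -(inj_eq val_inj) /= !inordK.
Qed.

Lemma hessL (R1 R2 : R) e1 e2 :
  hessian (fun q => bval (Lsys R1 R2) (chart_inv e1 e2 q)) (chart_pole R) =
  Ei (m2 (- (sgnb R e1 * R1)) 0 0 (- R2)).
Proof.
rewrite gL_eq (hess_gen (fun v r h1 h2 => @isd_gL R R1 R2 (sgnb R e1) r v h1 h2)
                        (fun v w => @isd_PL R R1 R2 (sgnb R e1) v w)).
rewrite /Ei /m2 /BL /D01 /D23; t44; rewrite !co4_ebasis //=; ring.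
Qed.

Lemma hessH (t : R) e1 e2 :
  hessian (fun q => bval (Hsys t) (chart_inv e1 e2 q)) (chart_pole R) =
  Ei (m2 (- ((1 - t) * sgnb R e1) - t * (sgnb R e1 * sgnb R e2)) t t
         (- (t * (sgnb R e1 * sgnb R e2)))).
Proof.
rewrite gH_eq (hess_gen (fun v r h1 h2 => @isd_gH R t (sgnb R e1) (sgnb R e2) r v h1 h2)
                        (fun v w => @isd_PH R t (sgnb R e1) (sgnb R e2) v w)).
rewrite /Ei /m2 /BH /D01 /D23; t44; rewrite !co4_ebasis //=; ring.
Qed.

Lemma inord_eq4 (a b : nat) : (a < 4)%N -> (b < 4)%N -> (inord a == inord b :> 'I_4) = (a == b).
Proof. by move=> ha hb; rewrite -(inj_eq val_inj) /= !inordK. Qed.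

Lemma OmegaE (R1 R2 : R) e1 : Omega R1 R2 e1 (chart_pole R) = Ej (dg (sgnb R e1 * R1) R2).
Proof.
rewrite /Omega /chart_pole !co4_0 expr0n /= !subr0 sqrtr1 !divr1 /Ej /dg /m2.
t44; ring.
Qed.

Lemma invOmega (d0 d1 : R) : d0 != 0 -> d1 != 0 ->
  invmx (Ej (dg d0 d1)) = Ej (dg (- d0^-1) (- d1^-1)).
Proof.
move=> h0 h1.
have h : Ej (dg d0 d1) *m Ej (dg (- d0^-1) (- d1^-1)) = 1%:M.
  rewrite /Ej /dg /m2; t44; rewrite ?inord_eq4 //= ?mulr1n ?mulr0n; field => //.
have [u _] := mulmx1_unit h.
by rewrite -[RHS]mul1mx -(mulVmx u) -mulmxA h mulmx1.
Qed.

End Sys.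

Section Sys2.
Variable R : realType.
Variables (R1 R2 t : R) (e1 e2 : bool).
Hypotheses (hR1 : 0 < R1) (hR2 : 0 < R2).
Local Notation s1 := (sgnb R e1).
Local Notation s2 := (sgnb R e2).
Definition alH := - ((1 - t) * s1) - t * (s1 * s2).
Definition beH := - (t * (s1 * s2)).
Definition mm00 := - (alH / (s1 * R1)).
Definition mm01 := - (t / (s1 * R1)).
Definition mm10 := - (t / R2).
Definition mm11 := - (beH / R2).
Definition discM := (mm00 - mm11)^+2 + 4 * (mm01 * mm10).

Lemma s1n0 : s1 != 0.
Proof. by case: e1; rewrite /sgnb ?oppr_eq0 oner_eq0. Qed.
Lemma d0n0 : s1 * R1 != 0.
Proof. by rewrite mulf_neq0 ?s1n0 // gt_eqF. Qed.
Lemma d1n0 : R2 != 0.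
Proof. by rewrite gt_eqF. Qed.

Lemma AmatL : Amat R1 R2 e1 e2 (Lsys R1 R2) = Ej id2.
Proof.
rewrite /Amat OmegaE (invOmega d0n0 d1n0) hessL EjEi; apply: Ej_ext => k l hk hl.
have h2 := sgnb2 R e1.
move: hk hl; case: k => [|[|]] //; case: l => [|[|]] // _ _;
  rewrite /mul2 /dg /id2 /m2 /=; field; rewrite ?d0n0 ?d1n0 ?s1n0 ?(gt_eqF hR1) ?(gt_eqF hR2) ?mulf_neq0 //.
Qed.

Lemma AmatH : Amat R1 R2 e1 e2 (Hsys t) = Ej (m2 mm00 mm01 mm10 mm11).
Proof.
rewrite /Amat OmegaE (invOmega d0n0 d1n0) hessH EjEi; apply: Ej_ext => k l hk hl.
move: hk hl; case: k => [|[|]] //; case: l => [|[|]] // _ _;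
  rewrite /mul2 /dg /m2 /mm00 /mm01 /mm10 /mm11 /alH /beH /=; field; rewrite ?d0n0 ?d1n0 ?s1n0 ?(gt_eqF hR1) ?(gt_eqF hR2) ?mulf_neq0 //.
Qed.

Lemma hm_sys : (s1 * R1) * mm01 = R2 * mm10.
Proof. rewrite /mm01 /mm10; field; rewrite ?d0n0 ?d1n0 ?s1n0 ?(gt_eqF hR1) ?(gt_eqF hR2) ?mulf_neq0 //. Qed.

Lemma nondeg_of_disc : discM != 0 -> nondeg_fixed_point R1 R2 t e1 e2.
Proof.
move=> hd; rewrite /nondeg_fixed_point OmegaE AmatL AmatH.
exact: (cartan_gen d0n0 d1n0 hm_sys hd).
Qed.

Lemma EE_of_disc : 0 < discM -> elliptic_elliptic R1 R2 t e1 e2.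
Proof. by move=> hd; rewrite /elliptic_elliptic AmatL AmatH; exact: EE_gen. Qed.

Lemma FF_of_disc : discM < 0 -> focus_focus R1 R2 t e1 e2.
Proof. by move=> hd; rewrite /focus_focus AmatL AmatH; exact: FF_gen. Qed.

Lemma degen_of_disc : discM = 0 -> t != 0 -> ~ nondeg_fixed_point R1 R2 t e1 e2.
Proof.
move=> hd ht; rewrite /nondeg_fixed_point OmegaE AmatL AmatH.
apply: (degen_gen d0n0 d1n0 hm_sys _ hd).
by rewrite /mm01 oppr_eq0 mulf_neq0 // invr_neq0 // d0n0.
Qed.

End Sys2.

Section Disc.
Variable R : realType.
Variables (R1 R2 t : R).
Hypotheses (hR1 : 0 < R1) (hR12 : R1 < R2) (ht0 : 0 <= t) (ht1 : t <= 1).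

Let hR2 : 0 < R2. Proof. exact: lt_trans hR1 hR12. Qed.

Lemma discE e1 e2 : discM R1 R2 t e1 e2 =
  ((R2 * ((1 - t) + t * sgnb R e2) - t * (sgnb R e1 * sgnb R e2) * R1) ^+ 2
     + 4 * (sgnb R e1 * t ^+ 2 * R1 * R2)) / (R1 ^+ 2 * R2 ^+ 2).
Proof.
rewrite /discM /mm00 /mm01 /mm10 /mm11 /alH /beH.
by case: e1; case: e2; rewrite /sgnb /=; field; rewrite ?(gt_eqF hR1) ?(gt_eqF hR2) //=.
Qed.

End Disc.

Section Disc2.
Variable R : realType.
Variables (R1 R2 t : R).
Hypotheses (hR1 : 0 < R1) (hR12 : R1 < R2) (ht0 : 0 <= t) (ht1 : t <= 1).

Let hR2 : 0 < R2. Proof. exact: lt_trans hR1 hR12. Qed.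
Let hD : 0 < R1 ^+ 2 * R2 ^+ 2. Proof. by rewrite mulr_gt0 // exprn_gt0. Qed.

Lemma disc_sign e1 e2 (N : R) :
  N = (R2 * ((1 - t) + t * sgnb R e2) - t * (sgnb R e1 * sgnb R e2) * R1) ^+ 2
     + 4 * (sgnb R e1 * t ^+ 2 * R1 * R2) ->
  [/\ 0 < N -> 0 < discM R1 R2 t e1 e2, N < 0 -> discM R1 R2 t e1 e2 < 0 &
      N = 0 -> discM R1 R2 t e1 e2 = 0].
Proof.
move=> ->; rewrite (discE _ hR1 hR12); split.
- by move=> h; rewrite divr_gt0.
- by move=> h; rewrite pmulr_llt0 // invr_gt0.
- by move=> ->; rewrite mul0r.
Qed.

Lemma disc_pos_e1 e2 : 0 < discM R1 R2 t true e2.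
Proof.
have hR1' := hR1; have hR12' := hR12; have ht0' := ht0; have ht1' := ht1; have hR2' := hR2.
have [] := disc_sign (e1 := true) (e2 := e2) (erefl _) => h _ _; apply: h.
rewrite /sgnb /= !mul1r.
have [t0|tp] := eqVneq t 0.
  subst t; have := exprn_gt0 2 hR2; lra.
have tp' : 0 < t by rewrite lt_def tp ht0.
have : 0 < t ^+ 2 * R1 * R2 by rewrite !mulr_gt0 // exprn_gt0.
move=> h; apply: ltr_wpDl; first exact: sqr_ge0.
by rewrite mulr_gt0.
Qed.

Lemma disc_pos_mp : 0 < discM R1 R2 t false true.
Proof.
have hR1' := hR1; have hR12' := hR12; have ht0' := ht0; have ht1' := ht1; have hR2' := hR2.
have [] := disc_sign (e1 := false) (e2 := true) (erefl _) => h _ _; apply: h.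
rewrite /sgnb /=.
have -> : (R2 * (1 - t + t * 1) - t * (-1 * 1) * R1) ^+ 2 + 4 * (-1 * t ^+ 2 * R1 * R2) =
  (1 - t) * R2 ^+ 2 + t * (R2 - R1) ^+ 2 + (4 * R1 * R2 - R1 ^+ 2) * (t * (1 - t)) by ring.
have h1 : 0 <= (4 * R1 * R2 - R1 ^+ 2) * (t * (1 - t)).
  apply: mulr_ge0; last by apply: mulr_ge0; [exact: ht0 | rewrite subr_ge0].
  have : 0 < R1 * (4 * R2 - R1) by apply: mulr_gt0 => //; lra.
  rewrite expr2; lra.
have h2 : 0 < (R2 - R1) ^+ 2 by rewrite exprn_gt0 // subr_gt0.
have h3 : (R2 - R1) ^+ 2 <= R2 ^+ 2.
  have : 0 < R1 * (2 * R2 - R1) by apply: mulr_gt0 => //; lra.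
  rewrite !expr2; lra.
have h4 : 0 <= (1 - t) * (R2 ^+ 2 - (R2 - R1) ^+ 2).
  by apply: mulr_ge0; rewrite subr_ge0.
lra.
Qed.

End Disc2.

Section Disc3.
Variable R : realType.

Lemma mm_analysis (R1 R2 t : R) : 0 < R1 -> R1 < R2 ->
  let N := (R2 * ((1 - t) + t * sgnb R false) - t * (sgnb R false * sgnb R false) * R1) ^+ 2
     + 4 * (sgnb R false * t ^+ 2 * R1 * R2) in
  [/\ 0 < t_minus R1 R2, t_minus R1 R2 < t_plus R1 R2 &
    exists c, 0 < c /\ N = c * (t_minus R1 R2 - t) * (t_plus R1 R2 - t)].
Proof.
move=> hR1 hR12 N.
have hR2 : 0 < R2 by apply: lt_trans hR1 hR12.
set s := Num.sqrt (R1 * R2).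
have s0 : 0 <= s by rewrite sqrtr_ge0.
have s2 : s ^+ 2 = R1 * R2 by rewrite sqr_sqrtr // mulr_ge0 // ltW.
have sp : 0 < s by rewrite sqrtr_gt0 mulr_gt0.
set P := 2 * R2 + R1 + 2 * s.
set Q := 2 * R2 + R1 - 2 * s.
have P0 : 0 < P by rewrite /P; lra.
have Q0 : 0 < Q.
  rewrite /Q; apply/negPn/negP; rewrite -leNgt => hq.
  have : (2 * R2 + R1) ^+ 2 <= (2 * s) ^+ 2 by rewrite ler_sqr ?nnegrE; lra.
  rewrite exprMn s2 !expr2; nra.
have tmE : t_minus R1 R2 = R2 / P by [].
have tpE : t_plus R1 R2 = R2 / Q by [].
split.
- by rewrite tmE divr_gt0.
- rewrite tmE tpE -subr_gt0.
  have -> : R2 / Q - R2 / P = R2 * (P - Q) / (P * Q) by field; rewrite ?gt_eqF.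
  by rewrite divr_gt0 ?mulr_gt0 // subr_gt0 /P /Q; lra.
exists (P * Q); split; first by rewrite mulr_gt0.
rewrite tmE tpE.
have -> : P * Q * (R2 / P - t) * (R2 / Q - t) = (R2 - t * P) * (R2 - t * Q).
  by field; rewrite ?gt_eqF.
have -> : (R2 - t * P) * (R2 - t * Q) =
  R2 ^+ 2 - t * R2 * (2 * (2 * R2 + R1)) + t ^+ 2 * ((2 * R2 + R1) ^+ 2 - 4 * s ^+ 2).
  by rewrite /P /Q; ring.
by rewrite s2 /N /sgnb /=; ring.
Qed.

End Disc3.

Section Fix.
Variable R : realType.
Implicit Types (p q w : 'rV[R]_6).

Lemma near_ball6 p (e : R) : 0 < e ->
  nbhs (p : ('rV[R]_6 : normedModType R)) (fun q : 'rV[R]_6 => forall k, `|q ord0 k - p ord0 k| < e).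
Proof.
move=> e0; apply/nbhs_ballP; exists e => //= q [_ hq] k.
have := hq ord0 k; rewrite -ball_normE /= distrC.
by [].
Qed.

Lemma isd_co6 p w k : is_derive p w (fun q : 'rV[R]_6 => co6 q k) (co6 w k).
Proof. exact: isd_coord. Qed.

Lemma isd_bvalL (R1 R2 : R) p w : co6 p 5 != 0 ->
  is_derive p w (bval (Lsys R1 R2)) (R1 * co6 w 2 + R2 * (co6 w 5 / co6 p 5)).
Proof.
move=> hp.
set z := co6 p 5.
pose sg : R := if 0 < z then 1 else -1.
have sg2 : sg * sg = 1 by rewrite /sg; case: ifP => _; rewrite ?mulr1 ?mulrNN ?mulr1.
have sgz : 0 < sg * z.
  rewrite /sg; case: ifP => h; first by rewrite mul1r.
  by rewrite mulN1r oppr_gt0 lt_neqAle hp leNgt h.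
have H := isdD (isdZ R1 (isd_co6 p w 2))
  (isdZ R2 (isd_ln (f := fun q => sg * co6 q 5) sgz (isdZ sg (isd_co6 p w 5)))).
apply: (near_eq_is_derive (f := fun q => R1 * co6 q 2 + R2 * ln (sg * co6 q 5))).
  have hz : 0 < `|z| / 2 by rewrite divr_gt0 // normr_gt0.
  apply: filterS (near_ball6 p hz) => q hq.
  rewrite /bval /Lsys /=; congr (_ + R2 * ln _).
  have := hq (inord 5); rewrite -/(co6 q 5) -/(co6 p 5) -/z ltr_norml => /andP [hd1 hd2].
  rewrite /sg; case: ifP => h.
    rewrite gtr0_norm // in hd1 hd2.
    by rewrite mul1r gtr0_norm //; lra.
  have hn : z < 0 by rewrite lt_neqAle hp leNgt h.
  rewrite ltr0_norm // in hd1 hd2.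
  by rewrite mulN1r ltr0_norm //; lra.
apply: (isd_eq H); rewrite /= -/z.
have sn : sg != 0 by apply/eqP => h; move: sg2; rewrite h mul0r => /eqP; rewrite eq_sym oner_eq0.
by field; rewrite sn hp.
Qed.

Lemma isd_bvalH (t : R) p w : is_derive p w (bval (Hsys t))
  ((1 - t) * co6 w 2 + t * (co6 w 0 * co6 p 3 + co6 p 0 * co6 w 3 + (co6 w 1 * co6 p 4 + co6 p 1 * co6 w 4)
     + (co6 w 2 * co6 p 5 + co6 p 2 * co6 w 5))).
Proof.
have -> : bval (Hsys t) = fun q => (1 - t) * co6 q 2 +
    t * (co6 q 0 * co6 q 3 + co6 q 1 * co6 q 4 + co6 q 2 * co6 q 5).
  by rewrite funeqE => q; rewrite /bval /= mul0r addr0.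
have H := isdD (isdZ (1 - t) (isd_co6 p w 2))
  (isdZ t (isdD (isdD (isdM (isd_co6 p w 0) (isd_co6 p w 3)) (isdM (isd_co6 p w 1) (isd_co6 p w 4)))
                (isdM (isd_co6 p w 2) (isd_co6 p w 5)))).
by apply: (isd_eq H); ring.
Qed.

End Fix.

Section Fix2.
Variable R : realType.
Implicit Types (p q w : 'rV[R]_6).

Lemma row6_eq p q : (forall k : nat, (k < 6)%N -> co6 p k = co6 q k) -> p = q.
Proof.
move=> h; apply/rowP => j; rewrite -(inord_val j).
by have := h j (ltn_ord j); rewrite /co6.
Qed.

Lemma sq2_0 (a b : R) : a ^+ 2 + b ^+ 2 = 0 -> a = 0 /\ b = 0.
Proof.
move=> h; have ha := sqr_ge0 a; have hb := sqr_ge0 b.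
have a2 : a ^+ 2 = 0 by lra.
have b2 : b ^+ 2 = 0 by lra.
by split; [move/eqP: a2 | move/eqP: b2]; rewrite expf_eq0 /= => /eqP.
Qed.

Lemma sq_one (a : R) : a ^+ 2 = 1 -> a = 1 \/ a = -1.
Proof.
move=> h; have : (a - 1) * (a + 1) = 0 by rewrite -subr_sqr h expr1n subrr.
move/eqP; rewrite mulf_eq0 => /orP [] /eqP h'; [left|right]; lra.
Qed.

Lemma fixed_char (R1 R2 t : R) p : 0 < R1 -> 0 < R2 ->
  fixed_point R1 R2 t p <-> exists e1 e2 : bool, p = pole R e1 e2.
Proof.
move=> hR1 hR2; split.
- move=> [[hM1 hM2] [hL _]]; move: hL; rewrite /b_crit.
  case: ifP => h5; last by move=> [hb _]; move: hb; rewrite /Lsys /= => h0; move: hR2; rewrite h0 ltxx.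
  move=> hL.
  have dv w := @derive_val _ _ _ _ _ _ _ (isd_bvalL R1 R2 w h5).
  set w1 := mk6 (- (co6 p 0 * co6 p 2)) (- (co6 p 1 * co6 p 2)) (co6 p 0 ^+ 2 + co6 p 1 ^+ 2) 0 0 0.
  have t1 : tangentM p w1 by rewrite /tangentM /w1 !co6_mk6 //=; split; ring.
  have := hL w1 t1; rewrite dv /w1 !co6_mk6 //= mul0r mulr0 addr0 => /eqP.
  rewrite mulf_eq0 (gt_eqF hR1) /= => /eqP /sq2_0 [p0 p1].
  set w2 := mk6 0 0 0 (- (co6 p 3 * co6 p 5)) (- (co6 p 4 * co6 p 5)) (co6 p 3 ^+ 2 + co6 p 4 ^+ 2).
  have t2 : tangentM p w2 by rewrite /tangentM /w2 !co6_mk6 //=; split; ring.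
  have := hL w2 t2; rewrite dv /w2 !co6_mk6 //= mulr0 add0r => /eqP.
  rewrite mulf_eq0 (gt_eqF hR2) /= mulf_eq0 invr_eq0 (negbTE h5) orbF => /eqP /sq2_0 [p3 p4].
  have h2 : co6 p 2 ^+ 2 = 1 by move: hM1; rewrite p0 p1 expr0n /= !add0r.
  have h5' : co6 p 5 ^+ 2 = 1 by move: hM2; rewrite p3 p4 expr0n /= !add0r.
  exists (co6 p 2 == 1), (co6 p 5 == 1); apply: row6_eq => k hk.
  rewrite /pole co6_mk6 //.
  move: hk; case: k => [|[|[|[|[|[|k]]]]]] //= _.
  + case: (sq_one h2) => ->; rewrite /sgnb ?eqxx //.
    case: ifP => // /eqP; lra.
  + case: (sq_one h5') => ->; rewrite /sgnb ?eqxx //.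
    case: ifP => // /eqP; lra.
- move=> [e1 [e2 ->]].
  have s1n : sgnb R e1 != 0 by case: e1; rewrite /sgnb ?oppr_eq0 oner_eq0.
  have s2n : sgnb R e2 != 0 by case: e2; rewrite /sgnb ?oppr_eq0 oner_eq0.
  have c5 : co6 (pole R e1 e2) 5 != 0 by rewrite /pole co6_mk6.
  have tg w : tangentM (pole R e1 e2) w -> co6 w 2 = 0 /\ co6 w 5 = 0.
    rewrite /tangentM /pole !co6_mk6 //= !mulr0 !add0r => -[/eqP h1 /eqP h2].
    by move: h1 h2; rewrite !mulf_eq0 (negbTE s1n) (negbTE s2n) !orbF => /eqP -> /eqP ->.
  split.
    by rewrite /onM /pole !co6_mk6 //= expr0n /= !add0r !expr2 !sgnb2.
  split; rewrite /b_crit c5 => w /tg [w2 w5].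
    by rewrite (@derive_val _ _ _ _ _ _ _ (isd_bvalL R1 R2 w c5)) w2 w5 mul0r !mulr0 addr0.
  rewrite (@derive_val _ _ _ _ _ _ _ (isd_bvalH t (pole R e1 e2) w)) w2 w5 /pole !co6_mk6 //=.
  ring.
Qed.

End Fix2.

Theorem proposition5p8 (R : realType) (R1 R2 t : R) :
  0 < R1 -> R1 < R2 -> 0 <= t -> t <= 1 ->
  (forall p : 'rV[R]_6, fixed_point R1 R2 t p <-> exists e1 e2 : bool, p = pole R e1 e2) /\
  (forall e1 e2 : bool, e1 || e2 ->
     nondeg_fixed_point R1 R2 t e1 e2 /\ elliptic_elliptic R1 R2 t e1 e2) /\
  ((t < t_minus R1 R2 \/ t_plus R1 R2 < t) ->
     nondeg_fixed_point R1 R2 t false false /\ elliptic_elliptic R1 R2 t false false) /\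
  (t_minus R1 R2 < t < t_plus R1 R2 ->
     nondeg_fixed_point R1 R2 t false false /\ focus_focus R1 R2 t false false) /\
  ((t = t_minus R1 R2 \/ t = t_plus R1 R2) -> ~ nondeg_fixed_point R1 R2 t false false).
Proof.
move=> hR1 hR12 ht0 ht1.
have hR2 : 0 < R2 by apply: lt_trans hR1 hR12.
split; first by move=> p; exact: fixed_char.
split.
  move=> e1 e2 he.
  have hd : 0 < discM R1 R2 t e1 e2.
    case: e1 he => [_|/= he2]; first exact: disc_pos_e1.
    by move: he2 => ->; exact: disc_pos_mp.
  by split; [apply: nondeg_of_disc => //; rewrite gt_eqF | exact: EE_of_disc].
have [tm0 tmp [c [c0 Nc]]] := mm_analysis t hR1 hR12.
have [hp hn hz] := @disc_sign R R1 R2 t hR1 hR12 false false _ (erefl _).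
split.
  move=> h.
  have hd : 0 < discM R1 R2 t false false.
    apply: hp; rewrite Nc.
    case: h => h.
      by rewrite !mulr_gt0 // subr_gt0 //; apply: lt_trans h tmp.
    have a : t_minus R1 R2 - t < 0 by rewrite subr_lt0; apply: lt_trans tmp h.
    have b : t_plus R1 R2 - t < 0 by rewrite subr_lt0.
    have ab : 0 < (t_minus R1 R2 - t) * (t_plus R1 R2 - t) by rewrite -mulrNN mulr_gt0 // oppr_gt0.
    by rewrite -mulrA mulr_gt0.
  by split; [apply: nondeg_of_disc => //; rewrite gt_eqF | exact: EE_of_disc].
split.
  move=> /andP [h1 h2].
  have hd : discM R1 R2 t false false < 0.
    have b : 0 < t_plus R1 R2 - t by rewrite subr_gt0.
    by apply: hn; rewrite Nc -mulrA (pmulr_rlt0 _ c0) (pmulr_llt0 _ b) subr_lt0.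
  by split; [apply: nondeg_of_disc => //; rewrite lt_eqF | exact: FF_of_disc].
move=> h.
have hd : discM R1 R2 t false false = 0.
  by apply: hz; rewrite Nc; case: h => ->; rewrite subrr ?mulr0 ?mul0r.
apply: degen_of_disc => //.
case: h => ->; rewrite gt_eqF //; apply: lt_trans tm0 tmp.
Qed.
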